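(* Let $X = \mathbb{Z}_m$ be the cyclic rack of order $m$, i.e. the set $\mathbb{Z}_m$ with operation $xy = x+1 \pmod m$ (a Rump right quasigroup with $x/y = x-1$), and let $R(x,y) = (y(x/y), x/y) = (y+1, x-1)$ be its associated solution of the Yang-Baxter equation, with set-theoretic Yang-Baxter chain complex $(C^{YB}_n(X),\partial^{YB}_n)$ (defined in the context). Identify a tuple $(a_1,\ldots,a_n)$ with $a_1\otimes\cdots\otimes a_n$, extended multilinearly to formal $\mathbb{Z}$-combinations of elements of $X$ in each slot. Define $\kappa_n: C^{YB}_n(X)\to C^{YB}_n(X)$ on generators by $$\kappa_n(x_1,\ldots,x_n) = (x_1 - x_2x_2)\otimes(x_2 - x_3x_3)\otimes\cdots\otimes(x_{n-1}-x_nx_n)\otimes x_n$$ (so $\kappa_1$ and $\kappa_0$ are the identity), where $x_jx_j$ denotes the product in $X$. Then $\kappa_* = (\kappa_n)_n$ is a chain map: $\partial^{YB}_n\circ\kappa_n = \kappa_{n-1}\circ\partial^{YB}_n$ for all $n$.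
   Context: For a set $X$ and a map $R: X\times X\to X\times X$ with components $R(x,y)=(\nu(x,y),\mu(x,y))$, the set-theoretic Yang-Baxter chain complex is: $C^{YB}_n(X)$ the free abelian group on $X^n$ ($n\ge0$). Face maps $d^l_{i,n}, d^r_{i,n}: X^n\to X^{n-1}$, $1\le i\le n$: $d^l_{1,n}$ deletes the first coordinate; for $i\ge2$, $d^l_{i,n}$ applies $R$ at positions $(i-1,i)$, then $(i-2,i-1)$, ..., then $(2,3)$, then replaces the first two coordinates $(a,b)$ by $\mu(a,b)$. $d^r_{n,n}$ deletes the last coordinate; for $i\le n-1$, $d^r_{i,n}$ applies $R$ at positions $(i,i+1)$, then $(i+1,i+2)$, ..., $(n-2,n-1)$, then replaces the last two coordinates $(a,b)$ by $\nu(a,b)$. The boundary is $\partial^{YB}_n=\sum_{i=1}^n(-1)^{i+1}(d^l_{i,n}-d^r_{i,n})$. *)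

(* Defs.v *)
From mathcomp Require Import all_boot all_order all_algebra.
Set Implicit Arguments. Unset Strict Implicit. Unset Printing Implicit Defensive.
Import GRing.Theory.
Local Open Scope ring_scope.

(* The cyclic rack of order m.+1 : X = Z_(m+1) represented as 'I_m.+1. *)
Definition X (m : nat) := 'I_m.+1.

Definition rop (m : nat) (x y : X m) : X m := ordS x.
Definition rdiv (m : nat) (x y : X m) : X m := ord_pred x.

(* R(x,y) = (y (x/y), x/y) = (nu x y, mu x y) *)
Definition nu (m : nat) (x y : X m) : X m := rop y (rdiv x y).
Definition mu (m : nat) (x y : X m) : X m := rdiv x y.

(* apply R at 0-indexed positions (k, k+1) of a word *)
Definition applyR (m : nat) (k : nat) (s : seq (X m)) : seq (X m) :=
  take k s ++ (match drop k s with
               | a :: b :: r => nu a b :: mu a b :: r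
               | r => r end).

Fixpoint downR (m : nat) (j : nat) (s : seq (X m)) : seq (X m) :=
  match j with 0 => s | j'.+1 => downR j' (applyR j s) end.

Fixpoint upR (m : nat) (k c : nat) (s : seq (X m)) : seq (X m) :=
  match c with 0 => s | c'.+1 => upR k.+1 c' (applyR k s) end.

(* left face d^l_{i,n}, 1 <= i <= n (1-indexed as in the paper) *)
Definition dl (m : nat) (i : nat) (s : seq (X m)) : seq (X m) :=
  if (i <= 1)%N then behead s
  else match downR (i - 2)%N s with
       | a :: b :: r => mu a b :: r
       | s' => s' end.

(* right face d^r_{i,n}, 1 <= i <= n *)
Definition dr (m : nat) (n i : nat) (s : seq (X m)) : seq (X m) :=
  if i == n then take (n - 1)%N s
  else match rev (upR (i - 1)%N (n - 1 - i)%N s) with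
       | b :: a :: r => rcons (rev r) (nu a b)
       | r => rev r end.

(* C_n^{YB}(X) : free abelian group on X^n, as integer coefficient functions *)
Definition chain (m n : nat) := {ffun n.-tuple (X m) -> int}.

Definition gen (m n : nat) (s : seq (X m)) : chain m n :=
  [ffun t : n.-tuple (X m) => ((tval t == s) : int)%:~R].

Definition linext (m n k : nat) (f : n.-tuple (X m) -> chain m k)
  (c : chain m n) : chain m k :=
  [ffun u => \sum_(t : n.-tuple (X m)) c t * f t u].

Definition bd_gen (m n : nat) (t : n.-tuple (X m)) : chain m n.-1 :=
  [ffun u => \sum_(1 <= i < n.+1)
     (-1) ^+ (i.+1)%N * (gen n.-1 (dl i t) u - gen n.-1 (dr n i t) u)].

Definition bd (m n : nat) (c : chain m n) : chain m n.-1 := linext (@bd_gen m n) c.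

(* tensor product of formal Z-combinations v_0, ..., v_{n-1} of elements of X *)
Definition tens (m n : nat) (v : 'I_n -> X m -> int) : chain m n :=
  [ffun t : n.-tuple (X m) => \prod_(i < n) v i (tnth t i)].

Definition delta (m : nat) (x : X m) : X m -> int := fun y => ((y == x) : int)%:~R.

Definition kappa_gen (m n : nat) (t : n.-tuple (X m)) : chain m n :=
  tens (fun i : 'I_n =>
    if (i.+1 < n)%N then
      (fun y => delta (tnth t i) y
                - delta (rop (nth ord0 t i.+1) (nth ord0 t i.+1)) y)
    else delta (tnth t i)).

Definition kappa (m n : nat) (c : chain m n) : chain m n := linext (@kappa_gen m n) c.

(* Main.v *)
Require Import Defs.
From mathcomp Require Import all_boot all_order all_algebra.
From mathcomp Require Import zify ring.
Set Implicit Arguments. Unset Strict Implicit. Unset Printing Implicit Defensive.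
Import GRing.Theory.


Ltac ifs := repeat (case: ifP => ?); try (exfalso; lia); try done.

Section Faces.
Variable m : nat.
Local Notation T := (X m).
Local Notation sg := (@ordS m.+1).
Local Notation pi := (@ord_pred m.+1).
Local Notation "s `# j" := (nth (ord0 : T) s j) (at level 3).

Lemma size_applyR k (s : seq T) : size (applyR k s) = size s.
Proof.
rewrite /applyR -{3}(cat_take_drop k s) !size_cat; congr (_ + _).
by case: (drop k s) => [|a [|b r]].
Qed.

Lemma nth_applyR k (s : seq T) j : k.+1 < size s ->
  (applyR k s) `# j = if j == k then sg (s `# k.+1) else if j == k.+1 then pi (s `# k) else s `# j.
Proof.
move=> hk.
rewrite /applyR (drop_nth ord0 (ltnW hk)) (drop_nth ord0 hk) nth_cat size_take.
rewrite (ltnW hk).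
case: (ltngtP j k) => hjk.
- rewrite nth_take //.
  by have -> : (j == k.+1) = false by lia.
- have [d ->] : exists d, j = k + d.+1 by exists (j - k).-1; lia.
  rewrite addKn /=.
  case: d => [|d] /=; first by rewrite addn1 eqxx.
  have -> : (k + d.+2 == k.+1) = false by lia.
  by rewrite nth_drop; congr nth; lia.
- by subst j; rewrite subnn.
Qed.

Lemma size_downR k (s : seq T) : size (downR k s) = size s.
Proof. by elim: k s => [|k IH] s //=; rewrite IH size_applyR. Qed.

Lemma size_upR k c (s : seq T) : size (upR k c s) = size s.
Proof. by elim: c k s => [|c IH] k s //=; rewrite IH size_applyR. Qed.

Lemma nth_downR k (s : seq T) (j : nat) : k.+1 < size s -> j != 1%N ->
  (downR k s) `# j = if j == 0%N then s `# 0 else if j <= k.+1 then pi (s `# j.-1) else s `# j.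
Proof.
elim: k s j => [|k IH] s j hk hj /=.
  by case: j hj => [|[|j]].
rewrite IH ?size_applyR //; last by lia.
case: j hj => [|[|j]] //= _.
  by rewrite (@nth_applyR k.+1 s 0).
have ha := (@nth_applyR k.+1 s j.+1 hk).
have hb := (@nth_applyR k.+1 s j.+2 hk).
rewrite ha hb; ifs; try done.
all: try by (have -> : j.+1 = k.+1 by lia).
Qed.

Lemma nth_upR k c (s : seq T) (j : nat) : k + c < size s -> j != k + c ->
  (upR k c s) `# j = if j < k then s `# j else if j < k + c then sg (s `# j.+1) else s `# j.
Proof.
elim: c k s j => [|c IH] k s j hk hj /=.
  by ifs.
rewrite IH ?size_applyR //; try lia.
have hk' : k.+1 < size s by lia.
rewrite !(nth_applyR _ hk'); ifs; try done.
all: try by (have -> : j = k by lia).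
all: try by (have -> : j.+1 = k.+1 by lia).
Qed.

Lemma dl_spec (i : nat) (s : seq T) : 0 < i <= size s ->
  size (dl i s) = (size s).-1 /\
  forall j, (dl i s) `# j = if j.+1 < i then pi (s `# j) else s `# j.+1.
Proof.
move=> hi; rewrite /dl; case: ifP => hi1.
  split; first by rewrite size_behead.
  by move=> j; rewrite nth_behead; ifs.
have hk : (i - 2).+1 < size s by lia.
have hsz := size_downR (i - 2) s.
have h0 := (@nth_downR (i - 2) s 0 hk isT).
have hj := (fun j => @nth_downR (i - 2) s j.+2 hk isT).
case E: (downR (i - 2) s) hsz h0 hj => [|a [|b r]] hsz h0 hj; try (simpl in hsz; lia).
split; first by rewrite -hsz.
case=> [|j] /=.
  by move: h0 => /= ->; rewrite /mu /rdiv; ifs.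
move: (hj j) => /= ->; ifs; try done.
all: by congr (pi (nth _ _ _)); lia.
Qed.

Lemma rev_match (w : seq T) : 1 < size w ->
  let r := match rev w with b :: a :: r => rcons (rev r) (nu a b) | r => rev r end in
  size r = (size w).-1 /\
  forall j, j < (size w).-1 -> r `# j = if j < (size w).-2 then w `# j else sg (w `# (size w).-1).
Proof.
case/lastP: w => [|w b] //; case/lastP: w => [|w a] //= _.
rewrite !rev_rcons /= revK !size_rcons; split=> //.
move=> j hj; rewrite !nth_rcons size_rcons; ifs; try done.
Qed.

Lemma dr_spec (n i : nat) (s : seq T) : size s = n -> 0 < i <= n ->
  size (dr n i s) = n.-1 /\
  forall j, j < n.-1 -> (dr n i s) `# j = if j.+1 < i then s `# j else sg (s `# j.+1).
Proof.
move=> hs hi; rewrite /dr; case: ifP => /eqP hin.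
  split; first by rewrite size_take hs; ifs; lia.
  by move=> j hj; rewrite nth_take; [ifs | lia].
have hw : 1 < size (upR (i - 1) (n - 1 - i) s) by rewrite size_upR; lia.
have [h1 h2] := rev_match hw.
rewrite size_upR hs in h1 h2.
split=> // j hj; rewrite h2 //.
have hk : i - 1 + (n - 1 - i) < size s by lia.
ifs; rewrite nth_upR //; try lia; ifs; try done; congr (sg (nth _ _ _)); lia.
Qed.
End Faces.

Module PartB.
Local Open Scope ring_scope.



Definition b2i (b : bool) : int := (b : int)%:~R.
Lemma b2iE b : b2i b = if b then 1 else 0.
Proof. by case: b. Qed.
Lemma b2i_and a b : b2i (a && b) = b2i a * b2i b.
Proof. by case: a; case: b; rewrite /= ?mulr0 ?mulr1. Qed.

Section Alg.
Variable m : nat.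
Local Notation T := (X m).
Local Notation sg := (@ordS m.+1).
Local Notation pi := (@ord_pred m.+1).
Local Notation "s `# j" := (nth (ord0 : T) s j) (at level 3).

Lemma deltaE (a y : T) : delta a y = b2i (y == a). Proof. by []. Qed.

Lemma delta_pred (a y : T) : delta (pi a) y = delta a (sg y).
Proof. rewrite !deltaE; congr b2i; apply/eqP/eqP => [->|<-]; by rewrite ?ord_predK ?ordSK. Qed.

Lemma delta_SS (a y : T) : delta (sg a) (sg y) = delta a y.
Proof. by rewrite !deltaE (inj_eq (@ordS_inj _)). Qed.

Lemma delta_Pr (a y : T) : delta a (pi y) = delta (sg a) y.
Proof. by rewrite -delta_SS ord_predK. Qed.

Lemma sum_delta (a : T) : \sum_(y : T) delta a y = 1.
Proof.
rewrite (bigD1 a) //= big1 ?addr0; first by rewrite deltaE eqxx.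
by move=> y /negbTE hy; rewrite deltaE hy.
Qed.

Lemma sum_b2i_eq (F : T -> int) (a : T) : \sum_(y : T) F y * b2i (a == y) = F a.
Proof.
rewrite (bigD1 a) //= big1 ?addr0; first by rewrite eqxx mulr1.
by move=> y hy; rewrite eq_sym (negbTE hy) mulr0.
Qed.

Lemma sum_b2i_pi (F : T -> int) (a : T) : \sum_(y : T) F y * b2i (a == pi y) = F (sg a).
Proof.
rewrite -[RHS](sum_b2i_eq F); apply: eq_bigr => y _; congr (_ * b2i _).
by apply/eqP/eqP => [->|<-]; rewrite ?ord_predK ?ordSK.
Qed.

Definition kf (w : seq T) (j : nat) (y : T) : int :=
  if (j.+1 < size w)%N then delta (w `# j) y - delta (sg (w `# j.+1)) y else delta (w `# j) y.

Lemma kappa_genE n (t s : n.-tuple T) :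
  kappa_gen t s = \prod_(0 <= j < n) kf t j (s `# j).
Proof.
rewrite big_mkord /kappa_gen /tens ffunE; apply: eq_bigr => j _.
by rewrite /kf size_tuple !(tnth_nth ord0) /rop; case: ifP.
Qed.

Lemma prod_sum_tuple n (F : nat -> T -> int) :
  \sum_(s : n.-tuple T) \prod_(0 <= j < n) F j (s `# j) = \prod_(0 <= j < n) \sum_(y : T) F j y.
Proof.
rewrite big_mkord bigA_distr_bigA /=.
rewrite (reindex (fun s : n.-tuple T => [ffun j : 'I_n => tnth s j])) /=.
  apply: eq_bigr => s _; rewrite big_mkord; apply: eq_bigr => j _.
  by rewrite ffunE (tnth_nth ord0).
apply: onW_bij; exists (fun f : {ffun 'I_n -> T} => [tuple f j | j < n]).
  by move=> s; apply: eq_from_tnth => j; rewrite tnth_mktuple ffunE.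
by move=> f; apply/ffunP => j; rewrite !ffunE tnth_mktuple.
Qed.

Lemma eq_seq_prod N (a b : seq T) : size a = N -> size b = N ->
  b2i (a == b) = \prod_(0 <= j < N) b2i (a `# j == b `# j).
Proof.
elim: N a b => [|N IH] [|x a] [|y b] //= ha hb.
  by rewrite big_geq.
rewrite big_ltn // eqseq_cons b2i_and (IH a b) ?big_add1 //=; by case: ha; case: hb.
Qed.

Lemma sum_gen N (w : seq T) (G : seq T -> int) : size w = N ->
  \sum_(s : N.-tuple T) b2i (tval s == w) * G s = G w.
Proof.
move=> hw; pose t0 : N.-tuple T := Tuple (introT eqP hw).
rewrite (bigD1 t0) //= eqxx mul1r big1 ?addr0 //.
move=> s hs; have -> : (tval s == w) = false; last by rewrite mul0r.
apply/negbTE; apply: contra hs => /eqP h; apply/eqP/val_inj => /=; exact: h.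
Qed.

Lemma prod_skip p N (G H : nat -> int) : (p <= N)%N ->
  (forall j, (j < p)%N -> G j = H j) -> H p = 1 ->
  (forall j, (p <= j < N)%N -> G j = H j.+1) ->
  \prod_(0 <= j < N) G j = \prod_(0 <= j < N.+1) H j.
Proof.
move=> hp h1 h2 h3.
rewrite (big_cat_nat (leq0n p) hp) (big_cat_nat (leq0n p) (leqW hp)) /=.
rewrite (big_ltn (leq_ltn_trans hp (ltnSn N))) h2 mul1r big_add1 /=.
congr (_ * _); apply: eq_big_nat => j hj; [exact: h1 | exact: h3].
Qed.

Lemma split3 p N (F : nat -> int) : (p < N)%N ->
  \prod_(0 <= j < N) F j = \prod_(0 <= j < p) F j * F p * \prod_(p.+1 <= j < N) F j.
Proof.
move=> hp; rewrite (big_cat_nat (leq0n p) (ltnW hp)) /= (big_ltn hp) mulrA //.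
Qed.

Lemma prod_zero p N (F : nat -> int) : (p < N)%N -> F p = 0 -> \prod_(0 <= j < N) F j = 0.
Proof. by move=> hp h; rewrite (split3 _ hp) h mulr0 mul0r. Qed.

Definition term (al be : nat -> int) N (i : nat) :=
  \prod_(0 <= j < N) (if (j.+2 < i)%N then al j else if j.+2 == i then al j + be j else be j).
Definition Qp (al be : nat -> int) N (k : nat) :=
  \prod_(0 <= j < N) (if (j < k)%N then al j else be j).

Lemma term_split al be N p : (p < N)%N -> term al be N p.+2 = Qp al be N p.+1 + Qp al be N p.
Proof.
move=> hp; rewrite /term /Qp !(split3 _ hp) ltnn eqxx ltnSn.
rewrite (@eq_big_nat _ _ _ 0 p _ (fun j => al j)); last by move=> j hj; ifs.
rewrite [X in _ = X * _ * _ + _](@eq_big_nat _ _ _ 0 p _ (fun j => al j)); last by move=> j hj; ifs.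
rewrite [X in _ = _ + X * _ * _](@eq_big_nat _ _ _ 0 p _ (fun j => al j)); last by move=> j hj; ifs.
rewrite (@eq_big_nat _ _ _ p.+1 N _ (fun j => be j)); last by move=> j hj; ifs.
rewrite [X in _ = _ * X + _](@eq_big_nat _ _ _ p.+1 N _ (fun j => be j)); last by move=> j hj; ifs.
rewrite [X in _ = _ + _ * X](@eq_big_nat _ _ _ p.+1 N _ (fun j => be j)); last by move=> j hj; ifs.
rewrite ltnn; ring.
Qed.

Lemma tele (al be : nat -> int) N :
  \sum_(1 <= i < N.+2) (-1) ^+ i.+1 * term al be N i = (-1) ^+ N * \prod_(0 <= j < N) al j.
Proof.
have key : forall k, (k <= N)%N ->
  \sum_(1 <= i < k.+2) (-1) ^+ i.+1 * term al be N i = (-1) ^+ k * Qp al be N k.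
  elim=> [|k IH] hk.
    rewrite big_nat1 /term /Qp expr0 sqrrN expr1n !mul1r.
    by apply: eq_big_nat => j _; ifs.
  rewrite big_nat_recr //= IH ?(ltnW hk) // term_split //.
  rewrite !exprS; ring.
by rewrite key // /Qp; congr (_ * _); apply: eq_big_nat => j hj; ifs.
Qed.

End Alg.

End PartB.
Import PartB.
Module PartC.
Local Open Scope ring_scope.



Section Main.
Variable m : nat.
Local Notation T := (X m).
Local Notation sg := (@ordS m.+1).
Local Notation pi := (@ord_pred m.+1).
Local Notation "s `# j" := (nth (ord0 : T) s j) (at level 3).

Lemma kf_dl N (t : seq T) (i j : nat) (y : T) : size t = N.+1 -> (0 < i <= N.+1)%N -> (j < N)%N ->
  kf (dl i t) j y = if (j.+2 < i)%N then kf t j (sg y)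
                    else if j.+2 == i then kf t j (sg y) + kf t j.+1 y else kf t j.+1 y.
Proof.
move=> hs hi hj.
have [h1 h2] := dl_spec (i := i) (s := t) (ltac:(lia)).
rewrite /kf h1 hs !h2 /=.
ifs; rewrite ?delta_pred ?delta_SS ?ord_predK; try ring.
Qed.


Lemma kf_dr N (t : seq T) (i j : nat) (y : T) : size t = N.+1 -> (0 < i <= N.+1)%N -> (j < N)%N ->
  kf (dr N.+1 i t) j y = if (j.+2 < i)%N then kf t j y
                    else if j.+2 == i then kf t j y + kf t j.+1 (pi y) else kf t j.+1 (pi y).
Proof.
move=> hs hi hj.
have [h1 h2] := dr_spec (n := N.+1) (i := i) hs hi.
rewrite /kf h1 hs /=.
ifs; rewrite ?h2 //=; try lia; ifs; rewrite ?delta_Pr; try ring.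
Qed.

Lemma sum_kh N (t : seq T) (i : nat) (h : nat -> T -> int) : size t = N.+1 ->
  (0 < i <= N.+1)%N -> (forall y, h i.-1 y = 1) ->
  \sum_(s : N.+1.-tuple T) (\prod_(0 <= j < N.+1) kf t j (s `# j)) * \prod_(0 <= j < N.+1) h j (s `# j)
  = if (i <= N)%N then 0 else \prod_(0 <= j < N) \sum_(y : T) kf t j y * h j y.
Proof.
move=> hs hi h1.
rewrite (eq_bigr (fun s : N.+1.-tuple T => \prod_(0 <= j < N.+1) (kf t j (s `# j) * h j (s `# j)))); last first.
  by move=> s _; rewrite big_split.
rewrite (@prod_sum_tuple m N.+1 (fun j y => kf t j y * h j y)); case: ifP => hiN.
  apply: (@prod_zero i.-1); first by lia.
  under eq_bigr => y _ do rewrite h1 mulr1.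
  rewrite /kf hs (_ : (i.-1.+1 < N.+1)%N = true); last by lia.
  by rewrite sumrB !sum_delta subrr.
have hiE : i = N.+1 by lia. subst i.
rewrite big_nat_recr //=.
under [X in _ * X = _]eq_bigr => y _ do rewrite (h1 y) mulr1.
by rewrite /kf hs ltnn sum_delta mulr1.
Qed.


Lemma genE n (w : seq T) (u : n.-tuple T) : gen n w u = b2i (tval u == w).
Proof. by rewrite ffunE. Qed.

Lemma lhs_dl N (t : seq T) (u : N.-tuple T) (i : nat) : size t = N.+1 -> (0 < i <= N.+1)%N ->
  \sum_(s : N.+1.-tuple T) (\prod_(0 <= j < N.+1) kf t j (s `# j)) * b2i (tval u == dl i s)
  = if (i <= N)%N then 0 else \prod_(0 <= j < N) kf t j (sg (u `# j)).
Proof.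
move=> hs hi.
pose h := fun j (y : T) => if (j.+1 < i)%N then b2i (u `# j == pi y)
           else if j.+1 == i then 1 else b2i (u `# j.-1 == y).
rewrite (eq_bigr (fun s : N.+1.-tuple T => (\prod_(0 <= j < N.+1) kf t j (s `# j)) * \prod_(0 <= j < N.+1) h j (s `# j))).
  rewrite (@sum_kh N t i h hs hi); last by move=> y; rewrite /h; ifs.
  case: ifP => // hiN; apply: eq_big_nat => j hj.
  by rewrite -[RHS](@sum_b2i_pi m (kf t j)); apply: eq_bigr => y _; rewrite /h; ifs.
move=> s _; congr (_ * _).
have [h1 h2] := dl_spec (i := i) (s := s) (ltac:(rewrite size_tuple; lia)).
rewrite size_tuple /= in h1.
rewrite (@eq_seq_prod m N) ?size_tuple //.
apply: (@prod_skip i.-1); first by lia.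
- by move=> j hj; rewrite h2 /h; ifs.
- by rewrite /h; ifs.
- move=> j hj; rewrite h2 /h; ifs; done.
Qed.

Lemma lhs_dr N (t : seq T) (u : N.-tuple T) (i : nat) : size t = N.+1 -> (0 < i <= N.+1)%N ->
  \sum_(s : N.+1.-tuple T) (\prod_(0 <= j < N.+1) kf t j (s `# j)) * b2i (tval u == dr N.+1 i s)
  = if (i <= N)%N then 0 else \prod_(0 <= j < N) kf t j (u `# j).
Proof.
move=> hs hi.
pose h := fun j (y : T) => if (j.+1 < i)%N then b2i (u `# j == y)
           else if j.+1 == i then 1 else b2i (u `# j.-1 == sg y).
rewrite (eq_bigr (fun s : N.+1.-tuple T => (\prod_(0 <= j < N.+1) kf t j (s `# j)) * \prod_(0 <= j < N.+1) h j (s `# j))).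
  rewrite (@sum_kh N t i h hs hi); last by move=> y; rewrite /h; ifs.
  case: ifP => // hiN; apply: eq_big_nat => j hj.
  by rewrite -[RHS](@sum_b2i_eq m (kf t j)); apply: eq_bigr => y _; rewrite /h; ifs.
move=> s _; congr (_ * _).
have [h1 h2] := dr_spec (n := N.+1) (i := i) (s := s) (size_tuple s) hi.
rewrite (@eq_seq_prod m N) ?size_tuple //.
apply: (@prod_skip i.-1); first by lia.
- by move=> j hj; rewrite h2 /h; [ifs|lia].
- by rewrite /h; ifs.
- by move=> j hj; rewrite h2 /h; [ifs|lia].
Qed.

Lemma gen_main N (t : N.+1.-tuple T) (u : N.-tuple T) :
  \sum_(s : N.+1.-tuple T) kappa_gen t s * bd_gen s u =
  \sum_(s : N.-tuple T) bd_gen t s * kappa_gen s u.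
Proof.
set al := fun j => kf t j (sg (u `# j)).
set be := fun j => kf t j.+1 (u `# j).
set ga := fun j => kf t j (u `# j).
set ze := fun j => kf t j.+1 (pi (u `# j)).
have hsz : size t = N.+1 by rewrite size_tuple.
have hu : size u = N by rewrite size_tuple.
have -> : \sum_(s : N.-tuple T) bd_gen t s * kappa_gen s u =
   \sum_(1 <= i < N.+2) (-1) ^+ i.+1 * (term al be N i - term ga ze N i).
  under eq_bigr => s _ do rewrite kappa_genE.
  under eq_bigr => s _ do rewrite ffunE big_distrl /=.
  rewrite exchange_big /=; apply: eq_big_nat => i hi.
  under eq_bigr => s _ do rewrite !ffunE -mulrA mulrBl.
  rewrite -big_distrr /= sumrB.
  have [hl1 hl2] := dl_spec (i := i) (s := t) (ltac:(lia)).
  have [hr1 hr2] := dr_spec (n := N.+1) (i := i) hsz (ltac:(lia)).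
  rewrite hsz /= in hl1.
  rewrite (@sum_gen m N (dl i t) (fun w => \prod_(0 <= j < N) kf w j (u `# j))) //.
  rewrite (@sum_gen m N (dr N.+1 i t) (fun w => \prod_(0 <= j < N) kf w j (u `# j))) //.
  rewrite /term; congr (_ * (_ - _)); apply: eq_big_nat => j hj.
    by rewrite (@kf_dl N t i j (u `# j) hsz); [|lia|lia].
  by rewrite (@kf_dr N t i j (u `# j) hsz); [|lia|lia].
under [in RHS]eq_big_nat => i _ do rewrite mulrBr.
rewrite sumrB !tele.
under [in LHS]eq_bigr => s _ do rewrite kappa_genE ffunE big_distrr /=.
rewrite exchange_big /=.
set PA := \prod_(0 <= j < N) al j.
set PG := \prod_(0 <= j < N) ga j.
rewrite (@eq_big_nat _ _ _ 1 N.+2 _ (fun i => (-1) ^+ i.+1 * ((if (i <= N)%N then 0 else PA) - (if (i <= N)%N then 0 else PG)))).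
  rewrite big_nat_recr //= big1_seq ?add0r; last first.
    move=> i /andP [_]; rewrite mem_index_iota => hi.
    by rewrite (_ : (i <= N)%N = true) ?subrr ?mulr0 //; lia.
  rewrite ltnn !exprS; ring.
move=> i hi.
under eq_bigr => s _ do rewrite !genE mulrCA mulrBr.
rewrite -big_distrr /= sumrB (@lhs_dl N t u i hsz) ?(@lhs_dr N t u i hsz) //; lia.
Qed.



End Main.

End PartC.
Import PartC.
Local Open Scope ring_scope.

Unset Implicit Arguments.
Theorem mainTheorem4 (m n : nat) (c : chain m n) :
  bd (kappa c) = kappa (bd c).
Proof.
have key : forall (t : n.-tuple (X m)) (u : n.-1.-tuple (X m)),
  \sum_(s : n.-tuple (X m)) kappa_gen t s * bd_gen s u =
  \sum_(s : n.-1.-tuple (X m)) bd_gen t s * kappa_gen s u.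
  case: n {c} => [|N] t u; last exact: gen_main.
  by rewrite !big1 // => s _; try rewrite [bd_gen _ _]ffunE; rewrite big_geq ?mulr0 ?mul0r.
apply/ffunP => u; rewrite /bd /kappa /linext ffunE [RHS]ffunE.
under [in LHS]eq_bigr => s _ do rewrite ffunE big_distrl /=.
under [in RHS]eq_bigr => s _ do rewrite ffunE big_distrl /=.
rewrite exchange_big [RHS]exchange_big /=; apply: eq_bigr => t _.
under [in LHS]eq_bigr => s _ do rewrite -mulrA.
under [in RHS]eq_bigr => s _ do rewrite -mulrA.
by rewrite -!big_distrr /= key.
Qed.
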